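(* Let $T\colon X\to X$ be a Borel measurable map of a compact metric space and let $\lambda$ be a fully supported non-singular Borel probability measure which is $\limsup$ full. If $\lambda$ is equivalent to a $T$-invariant probability measure $\mu$ (i.e. $\mu\ll\lambda$ and $\lambda\ll\mu$), then $\lambda$ is full.
   Context: $\lambda$ is non-singular if $\lambda(A)=0$ iff $\lambda(T^{-1}A)=0$; fully supported if every nonempty open set has positive measure. $\lambda$ is $\limsup$ full if $\lambda(A)>0$ implies $\limsup_n\lambda(T^n(A))=1$, and full if $\lambda(A)>0$ implies $\lim_n\lambda(T^n(A))=1$ (images measured with the completion). *)

(* Defs.v *)
From HB Require Import structures.
From mathcomp Require Import all_boot all_order all_algebra.
From mathcomp Require Import all_classical all_reals all_analysis.
Set Implicit Arguments. Unset Strict Implicit. Unset Printing Implicit Defensive.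
Import Order.TTheory GRing.Theory Num.Theory.
Import numFieldNormedType.Exports.
Local Open Scope classical_set_scope.
Local Open Scope ring_scope.

(* Metric spaces with a distinguished point (measurable types in MathComp-
   Analysis are required to be pointed; a space carrying a probability
   measure is nonempty anyway). *)
#[short(type="pmetricType")]
HB.structure Definition PointedMetric (K : numDomainType) :=
  { M of Metric K M & isPointed M }.

Notation borel X := (g_sigma_algebraType (@open X)).

(* Measure of an arbitrary set B with respect to the completion of mu:
   for B in the completed sigma-algebra this is exactly the completed
   measure of B (it equals inf { mu C | C measurable, B <= C }). *)
Definition completion_measure {d} {T : measurableType d} {R : realType}
  (mu : set T -> \bar R) (B : set T) : \bar R :=
  ereal_inf [set mu C | C in [set C | measurable C /\ B `<=` C]].

Definition fimage {X : Type} (T : X -> X) (n : nat) (A : set X) : set X :=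
  (iter n T) @` A.

Section defs.
Context {R : realType} (X : pmetricType R).
Local Notation BX := (borel X).

Definition fully_supported (lam : set BX -> \bar R) :=
  forall U : set X, open U -> U !=set0 -> (0 < lam U)%E.

Definition non_singular (T : X -> X) (lam : set BX -> \bar R) :=
  forall A : set BX, measurable A -> (lam A = 0)%E <-> (lam (T @^-1` A) = 0)%E.

Definition limsup_full (T : X -> X) (lam : set BX -> \bar R) :=
  forall A : set BX, measurable A -> (0 < lam A)%E ->
    limn_esup (fun n => completion_measure lam (fimage T n A)) = 1%E.

Definition full (T : X -> X) (lam : set BX -> \bar R) :=
  forall A : set BX, measurable A -> (0 < lam A)%E ->
    (fun n => completion_measure lam (fimage T n A)) @ \oo --> 1%E.

Definition T_invariant (T : X -> X) (mu : set BX -> \bar R) :=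
  forall A : set BX, measurable A -> mu (T @^-1` A) = mu A.
End defs.

(* Main.v *)
Require Import Defs.
From HB Require Import structures.
From mathcomp Require Import all_boot all_order all_algebra.
From mathcomp Require Import all_classical all_reals all_analysis.
From mathcomp Require Import lra.
Import Order.TTheory GRing.Theory Num.Theory.
Import numFieldNormedType.Exports.
Local Open Scope classical_set_scope.
Local Open Scope ring_scope.

Lemma ac_eps {d} {T : measurableType d} {R : realType} (P Q : probability T R) :
  P `<< Q -> forall e : R, 0 < e -> exists del : R, 0 < del /\
    forall A, measurable A -> (Q A < del%:E)%E -> (P A < e%:E)%E.
Proof.
move=> PQ e e0.
have [Pp [Nn PN]] := Hahn_decomposition (charge_of_finite_measure P).
have [del [del0 H]] := @charge_variation_continuous _ _ _ _ _ _ PN Q PQ e e0.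
exists del; split => // A mA QA.
apply: le_lt_trans (H A mA QA).
apply: le_trans (abse_charge_variation PN mA).
exact: lee_abs.
Qed.

Lemma fin_prob d (T : measurableType d) (R : realType) (P : probability T R) A :
  measurable A -> P A = (fine (P A))%:E.
Proof. by move=> mA; rewrite fineK// fin_num_measure. Qed.

Lemma ac_outer d (T : measurableType d) (R : realType) (P Q : probability T R) :
  P `<< Q -> forall e : R, 0 < e -> exists del : R, 0 < del /\
    forall B, ((1 - del)%:E < completion_measure Q B)%E ->
      ((1 - e)%:E <= completion_measure P B)%E.
Proof.
move=> PQ e e0; have [del [del0 H]] := @ac_eps _ _ _ P Q PQ e e0.
exists del; split => // B HB.
apply: le_ereal_inf_tmp => _ [C [mC BC] <-].
have QC : ((1 - del)%:E < Q C)%E.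
  apply: lt_le_trans HB _; apply: ereal_inf_lbound; by exists C.
have mCc : measurable (~` C) by exact: measurableC.
have := H _ mCc.
rewrite !probability_setC // (@fin_prob _ _ _ P C mC) (@fin_prob _ _ _ Q C mC) in QC *.
rewrite -!EFinB !lte_fin lee_fin.
move: QC; rewrite lte_fin => QC.
move=> /(_ ltac:(lra)); lra.
Qed.

Theorem mainTheorem6 (R : realType) (X : pmetricType R)
  (T : X -> X) (lam mu : probability (borel X) R) :
  compact [set: X] ->
  measurable_fun [set: borel X] (T : borel X -> borel X) ->
  fully_supported lam ->
  non_singular T lam ->
  limsup_full T lam ->
  T_invariant T mu ->
  mu `<< lam -> lam `<< mu ->
  full T lam.
Proof.
move=> _ mT _ _ Hls Tinv mul lamu A mA lA.
set a := fun n => completion_measure lam (fimage T n A).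
set b := fun n => completion_measure mu (fimage T n A).
have b_mono n : (b n <= b n.+1)%E.
  apply: le_ereal_inf_tmp => _ [C [mC BC] <-].
  have mTC : measurable (T @^-1` C : set (borel X)).
    by have := mT measurableT C mC; rewrite setTI.
  rewrite -Tinv //; apply: ereal_inf_lbound; exists (T @^-1` C : set (borel X)) => //; split => //.
  move=> _ [x Ax <-]; apply: BC; by exists x.
have b_mon n m : (n <= m)%N -> (b n <= b m)%E.
  elim: m => [|m IH]; first by rewrite leqn0 => /eqP ->.
  rewrite leq_eqVlt => /orP [/eqP -> //|]; rewrite ltnS => /IH.
  by move=> /le_trans; apply.
have a_le1 n : (a n <= 1)%E.
  rewrite -(probability_setT lam); apply: ereal_inf_lbound; exists setT => //.
have a_ge0 n : (0 <= a n)%E.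
  by apply: le_ereal_inf_tmp => _ [C [mC BC] <-].
have a_big del : 0 < del -> exists n, ((1 - del)%:E < a n)%E.
  move=> del0; apply: contrapT => /forallNP H.
  have : (limn_esup a <= (1 - del)%:E)%E.
    apply: ge_ereal_inf; exists (ereal_sup (a @` setT)).
      by exists setT => //; exact: filterT.
    apply: ge_ereal_sup => _ [n _ <-]; rewrite leNgt; apply/negP; exact: H.
  rewrite (Hls A mA lA) lee_fin; lra.
apply/fine_cvgP; split.
  apply: nearW => n; rewrite ge0_fin_numE //.
  exact: le_lt_trans (a_le1 n) (ltry _).
apply/cvgrPdist_le => e e0.
have [del [del0 Hd]] := @ac_outer _ _ _ lam mu lamu e e0.
have del20 : 0 < del / 2 by rewrite divr_gt0.
have [del' [del'0 Hd']] := @ac_outer _ _ _ mu lam mul _ del20.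
have [n0 Hn0] := a_big del' del'0.
have Hb0 := Hd' _ Hn0.
exists n0 => // n /= Hn.
have Ha : ((1 - e)%:E <= a n)%E.
  apply: Hd; apply: lt_le_trans (b_mon _ _ Hn).
  apply: lt_le_trans Hb0; rewrite lte_fin; lra.
have := a_le1 n; have := a_ge0 n.
move: Ha; rewrite -(@fineK _ (a n)); last first.
  by rewrite ge0_fin_numE //; exact: le_lt_trans (a_le1 n) (ltry _).
rewrite !lee_fin => H1 H2 H3.
rewrite ler_norml; apply/andP; split; lra.
Qed.
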